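(* Let $K$ be a $p$-adic field and let $L$ be a totally ramified finite extension of $K$. Then the following are equivalent: (1) there exists a compatible system of angular component maps $(\mathrm{ac}_N)_{N\ge1}$ on $L$ whose restrictions to $K$ determine a compatible system of angular component maps on $K$ (i.e. $\mathrm{ac}_N(K)\subseteq\mathcal{O}_K/(N\mathcal{M}_K)\subseteq \mathcal{O}_L/(N\mathcal{M}_L)$ for all $N$); (2) there exists a uniformizer $\tau$ of $L$ such that $\tau^{[L:K]}\in K$.
   Context: A $p$-adic field is a finite extension of $\mathbb{Q}_p$. For a valued field $K$ with valuation ring $\mathcal{O}_K$ and maximal ideal $\mathcal{M}_K$ and $N\ge1$, let $R_N=\mathcal{O}_K/(N\mathcal{M}_K)$. An angular component map $\mathrm{ac}_N\colon K\to R_N$ is a multiplicative homomorphism $K^\times\to R_N^\times$ whose restriction to $\mathcal{O}_K^\times$ is the natural projection, extended by $\mathrm{ac}_N(0)=0$. A family $(\mathrm{ac}_N)_{N\ge1}$ is a compatible system if it commutes with the natural projections $R_{NM}\to R_N$ for all $N,M$. For $K\le L$ with $\mathcal{O}_K=K\cap\mathcal{O}_L$, one has $N\mathcal{M}_K=K\cap N\mathcal{M}_L$, so $\mathcal{O}_K/(N\mathcal{M}_K)$ is naturally a subring of $\mathcal{O}_L/(N\mathcal{M}_L)$. *)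

(* Defs.v *)
From HB Require Import structures.
From mathcomp Require Import all_boot all_order all_algebra all_field.
Set Implicit Arguments. Unset Strict Implicit. Unset Printing Implicit Defensive.
Import Order.TTheory GRing.Theory Num.Theory.
Local Open Scope ring_scope.

(* A (normalized) discrete valuation on a field F is given by a map
   v : F -> int; the value at 0 is irrelevant (0 has valuation +oo). *)
Section Valuation.
Variables (F : fieldType) (v : F -> int).

Definition vring : pred F := [pred x | (x == 0) || (0 <= v x)].
Definition vmax  : pred F := [pred x | (x == 0) || (0 < v x)].
Definition vball (k : int) : pred F := [pred x | (x == 0) || (k <= v x)].

Record discrete_valuation : Prop := DVal {
  dv_mul : forall x y, x != 0 -> y != 0 -> v (x * y) = v x + v y;
  dv_add : forall x y, x != 0 -> y != 0 -> x + y != 0 ->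
             Num.min (v x) (v y) <= v (x + y);
  dv_norm : exists pi, pi != 0 /\ v pi = 1 }.

Definition uniformizer (pi : F) := pi != 0 /\ v pi = 1.

Definition vcomplete :=
  forall u : nat -> F,
    (forall k : int, exists n0, forall m n, (n0 <= m)%N -> (n0 <= n)%N ->
        u m - u n \in vball k) ->
    exists l, forall k : int, exists n0, forall n, (n0 <= n)%N -> u n - l \in vball k.

Definition finite_residue_field :=
  exists s : seq F, forall x, x \in vring -> exists2 y, y \in s & x - y \in vmax.

(* A p-adic field: a field of characteristic 0, complete for a discrete
   valuation with finite residue field (= finite extension of Q_p). *)
Definition padic_field :=
  [/\ [pchar F] =i pred0, discrete_valuation, vcomplete & finite_residue_field].

(* congruence modulo N * M_F inside O_F : x = y in O_F/(N M_F) *)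
Definition congr_mod (N : nat) (x y : F) :=
  exists2 m, m \in vmax & x - y = N%:R * m.

(* ac : F -> F, read as the map x |-> class of (ac x) in R_N = O_F/(N M_F),
   is an angular component map of level N *)
Definition ac_map (N : nat) (ac : F -> F) :=
  [/\ forall x, ac x \in vring,
      congr_mod N (ac 0) 0,
      forall x y, x != 0 -> y != 0 -> congr_mod N (ac (x * y)) (ac x * ac y),
      forall x, x != 0 -> exists2 y, y \in vring & congr_mod N (ac x * y) 1
    & forall u, u != 0 -> v u = 0 -> congr_mod N (ac u) u].

Definition ac_system (ac : nat -> F -> F) :=
  (forall N, (0 < N)%N -> ac_map N (ac N)) /\
  (forall N M, (0 < N)%N -> (0 < M)%N -> forall x, congr_mod N (ac (N * M)%N x) (ac N x)).

End Valuation.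

Section Extension.
Variables (K : fieldType) (L : fieldExtType K) (vK : K -> int) (vL : L -> int).

Definition extends_val := forall a : K, (a%:A \in vring vL) = (a \in vring vK).

(* e(L/K) = [L:K] *)
Definition totally_ramified :=
  exists piK : K, uniformizer vK piK /\ vL piK%:A = (\dim {:L})%:Z.

Definition ac_restricts (ac : nat -> L -> L) :=
  forall N, (0 < N)%N -> forall a : K,
    exists2 b, b \in vring vK & congr_mod vL N (ac N a%:A) b%:A.

End Extension.

(* Main.v *)
Require Import Defs.
From HB Require Import structures.
From mathcomp Require Import all_boot all_order all_algebra all_field.
From mathcomp Require Import zify ring.
From Stdlib Require Import ClassicalEpsilon.
Import Order.TTheory GRing.Theory Num.Theory.
Local Open Scope ring_scope.
Set Implicit Arguments. Unset Strict Implicit.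

Lemma nchoice (A B : Type) (P : A -> B -> Prop) :
  (forall a, exists b, P a b) -> exists f : A -> B, forall a, P a (f a).
Proof.
move=> H; exists (fun a => proj1_sig (constructive_indefinite_description _ (H a))).
by move=> a; case: (constructive_indefinite_description _ (H a)).
Qed.

Section Val.
Variables (F : fieldType) (v : F -> int) (hv : discrete_valuation v).

Lemma v1 : v 1 = 0.
Proof.
have := dv_mul hv (oner_neq0 F) (oner_neq0 F); rewrite mulr1 => h.
by apply: (addrI (v 1)); rewrite addr0 -h.
Qed.

Lemma vM x y : x != 0 -> y != 0 -> v (x * y) = v x + v y.
Proof. exact: dv_mul. Qed.

Lemma vV x : x != 0 -> v x^-1 = - v x.
Proof.
move=> x0; have := vM x0 (invr_neq0 x0); rewrite mulfV // v1; lia.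
Qed.

Lemma vN1 : v (-1) = 0.
Proof.
have n1 : (-1 : F) != 0 by rewrite oppr_eq0 oner_neq0.
have := vM n1 n1; rewrite mulrNN mulr1 v1; lia.
Qed.

Lemma vN x : v (- x) = v x.
Proof.
have [->|x0] := eqVneq x 0; first by rewrite oppr0.
have n1 : (-1 : F) != 0 by rewrite oppr_eq0 oner_neq0.
by rewrite -mulN1r vM // vN1 add0r.
Qed.

Lemma vX x k : x != 0 -> v (x ^+ k) = (k%:Z * v x)%R.
Proof.
move=> x0; elim: k => [|k IH]; first by rewrite expr0 v1 mul0r.
rewrite exprS vM ?expf_neq0 // IH; lia.
Qed.

Lemma vball_def k x : (x \in vball v k) = (x == 0) || (k <= v x).
Proof. by []. Qed.

Lemma vball0 k : 0 \in vball v k.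
Proof. by rewrite vball_def eqxx. Qed.

Lemma vballN k x : (- x \in vball v k) = (x \in vball v k).
Proof. by rewrite !vball_def oppr_eq0 vN. Qed.

Lemma vballD k x y : x \in vball v k -> y \in vball v k -> x + y \in vball v k.
Proof.
rewrite !vball_def; have [->|x0] := eqVneq x 0; first by rewrite add0r.
have [->|y0] := eqVneq y 0; first by rewrite addr0 /= => ->; rewrite orbT.
have [s0|s0] := eqVneq (x + y) 0; first by rewrite s0.
move=> /= hx hy; have := dv_add hv x0 y0 s0.
by move=> h2; apply: le_trans h2; rewrite le_min hx hy.
Qed.

Lemma vballB k x y : x \in vball v k -> y \in vball v k -> x - y \in vball v k.
Proof. by move=> hx hy; apply: vballD => //; rewrite vballN. Qed.

Lemma vballM a b x y : x \in vball v a -> y \in vball v b -> x * y \in vball v (a + b).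
Proof.
rewrite !vball_def; have [->|x0] := eqVneq x 0; first by rewrite mul0r eqxx.
have [->|y0] := eqVneq y 0; first by rewrite mulr0 eqxx.
by rewrite /= mulf_eq0 (negbTE x0) (negbTE y0) vM //; apply: lerD.
Qed.

Lemma vball_le a b x : a <= b -> x \in vball v b -> x \in vball v a.
Proof. by rewrite !vball_def => ab /orP[->//|h]; rewrite (le_trans ab h) orbT. Qed.

Lemma vball_all x : (forall k, x \in vball v k) -> x = 0.
Proof.
move=> h; apply/eqP; apply: contraT => x0.
by move: (h (v x + 1)); rewrite vball_def (negbTE x0) /=; lia.
Qed.

Lemma vringE x : (x \in vring v) = (x \in vball v 0). Proof. by []. Qed.
Lemma vmaxE x : (x \in vmax v) = (x \in vball v 1).
Proof. by rewrite /vmax /vball !inE; lia. Qed.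

Lemma vstrict x y : x != 0 -> y != 0 -> v x < v y -> (x + y != 0) /\ v (x + y) = v x.
Proof.
move=> x0 y0 lt.
have s0 : x + y != 0.
  apply: contraTneq lt => /eqP; rewrite addr_eq0 => /eqP ->; rewrite vN; lia.
split => //.
have h1 := dv_add hv x0 y0 s0.
have h2 : Num.min (v (x + y)) (v (-y)) <= v ((x + y) + (- y)).
  by apply: dv_add => //; rewrite ?oppr_eq0 // addrK.
rewrite vN addrK in h2.
move: h1 h2; rewrite /Num.min; case: ifP; case: ifP; lia.
Qed.

Lemma near_unit u z : u != 0 -> v u = 0 -> z - u \in vball v 1 -> z != 0 /\ v z = 0.
Proof.
move=> u0 vu; rewrite vball_def; have [e _|d0 /= hd] := eqVneq (z - u) 0.
  by move/eqP: e; rewrite subr_eq0 => /eqP ->.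
have := @vstrict u (z - u) u0 d0; rewrite vu; move=> /(_ _) [];
  first by lia.
by rewrite addrC subrK => -> ->.
Qed.

End Val.

Section Ext.
Variables (K : fieldType) (L : fieldExtType K) (vK : K -> int) (vL : L -> int).
Hypotheses (hK : discrete_valuation vK) (hL : discrete_valuation vL)
  (ext : extends_val vK vL) (Kc : vcomplete vK).
Variable piK : K.
Hypotheses (piK0 : piK != 0) (vpiK : vK piK = 1)
  (vLpiK : vL piK%:A = (\dim {:L})%:Z).
Local Notation n := (\dim {:L}).

Lemma algM (a b : K) : (a * b)%:A = a%:A * b%:A :> L.
Proof. exact: (rmorphM (in_alg L)). Qed.
Lemma algV (a : K) : (a^-1)%:A = (a%:A)^-1 :> L.
Proof. exact: (fmorphV (in_alg L)). Qed.
Lemma algB (a b : K) : (a - b)%:A = a%:A - b%:A :> L.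
Proof. exact: (rmorphB (in_alg L)). Qed.
Lemma algX (a : K) k : (a ^+ k)%:A = a%:A ^+ k :> L.
Proof. exact: (rmorphXn (in_alg L)). Qed.
Lemma alg_eq0 (a : K) : (a%:A == 0 :> L) = (a == 0).
Proof. exact: (fmorph_eq0 (in_alg L)). Qed.
Lemma n_gt0 : (0 < n)%N.
Proof. exact: adim_gt0. Qed.

Lemma vL_unit a : a != 0 -> vK a = 0 -> vL a%:A = 0.
Proof.
move=> a0 va.
have A0 : a%:A != 0 :> L by rewrite alg_eq0.
have h1 : a%:A \in vring vL by rewrite ext vringE vball_def va lexx orbT.
have h2 : (a^-1)%:A \in vring vL.
  by rewrite ext vringE vball_def (vV hK a0) va oppr0 lexx orbT.
rewrite algV in h2.
move: h1 h2; rewrite !vringE !vball_def (negbTE A0) invr_eq0 (negbTE A0) (vV hL A0) /=.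
by move=> h1 h2; apply/eqP; rewrite eq_le -oppr_ge0 h2 /=; exact: h1.
Qed.

Lemma vLK a : a != 0 -> vL a%:A = (n%:Z * vK a)%R.
Proof.
move=> a0.
have pk0 k : piK ^+ k != 0 := expf_neq0 k piK0.
have Pk0 k : piK%:A ^+ k != 0 :> L by rewrite expf_neq0 // alg_eq0.
set b := a * piK ^+ (absz (vK a)).
have b0 : b != 0 by rewrite mulf_neq0.
have vb : vK b = vK a + (absz (vK a))%:Z.
  by rewrite /b (vM hK) // (vX hK _ piK0) vpiK mulr1.
have [j hj] : exists j : nat, vK b = j%:Z.
  exists (absz (vK b)); rewrite gez0_abs // vb; lia.
set u := b / piK ^+ j.
have u0 : u != 0 by rewrite mulf_neq0 // invr_neq0.
have vu : vK u = 0 by rewrite /u (vM hK) ?invr_neq0 // (vV hK) // (vX hK _ piK0) vpiK hj; lia.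
have H1 : vL b%:A = (j%:Z * n%:Z)%R.
  have -> : b = u * piK ^+ j by rewrite /u divfK.
  by rewrite algM algX (vM hL) ?alg_eq0 // (vL_unit u0 vu) (vX hL _) ?alg_eq0 // vLpiK add0r.
have H2 : vL b%:A = vL a%:A + ((absz (vK a))%:Z * n%:Z)%R.
  by rewrite /b algM algX (vM hL) ?alg_eq0 // (vX hL _) ?alg_eq0 // vLpiK.
move: H1 H2; rewrite -hj vb; nia.
Qed.

Lemma vLK_ball a k : a \in vball vK k -> a%:A \in vball vL (n%:Z * k).
Proof.
rewrite !vball_def alg_eq0; have [//|a0 /=] := eqVneq a 0.
rewrite vLK //; have := n_gt0; nia.
Qed.

Lemma vLK_ball_inv a k : a%:A \in vball vL (n%:Z * k) -> a \in vball vK k.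
Proof.
rewrite !vball_def alg_eq0; have [//|a0 /=] := eqVneq a 0.
rewrite vLK //; have := n_gt0; nia.
Qed.

Variable pi : L.
Hypotheses (pi0 : pi != 0) (vpi : vL pi = 1).

Lemma vterm (a : K) i : a != 0 -> vL (a%:A * pi ^+ i) = (n%:Z * vK a + i%:Z)%R.
Proof.
move=> a0; rewrite (vM hL) ?alg_eq0 ?expf_neq0 // vLK // (vX hL _ pi0) vpi; lia.
Qed.

Lemma term_ball (b : K) i k : (0 <= k)%R -> b \in vball vK k ->
  b%:A * pi ^+ i \in vball vL k.
Proof.
move=> k0; rewrite !vball_def mulf_eq0 alg_eq0; have [//|b0 /=] := eqVneq b 0.
rewrite vterm //; have := n_gt0; nia.
Qed.

Lemma term_ball_inv (b : K) i k : (i < n)%N ->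
  b%:A * pi ^+ i \in vball vL (n%:Z * (k + 1)) -> b \in vball vK k.
Proof.
move=> lt; rewrite !vball_def mulf_eq0 alg_eq0; have [//|b0 /=] := eqVneq b 0.
rewrite expf_eq0 (negbTE pi0) andbF /= vterm //; nia.
Qed.

Lemma sum_ball_easy (j : nat) (F : nat -> L) k :
  (forall i, (i < j)%N -> F i \in vball vL k) -> \sum_(i < j) F i \in vball vL k.
Proof.
move=> h; apply: (big_ind (fun x => x \in vball vL k)).
- exact: vball0.
- exact: vballD.
- by move=> i _; apply: h.
Qed.

Lemma modn_distinct (x y : int) (i j : nat) : (i < j)%N -> (j < n)%N ->
  (n%:Z * x + i%:Z)%R != (n%:Z * y + j%:Z)%R.
Proof.
move=> ij jn; apply/eqP => e.
have e2 : (n%:Z * (x - y) = j%:Z - i%:Z)%R by rewrite mulrBr; lia.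
case: (lerP (x - y) 0) => h.
  have : (n%:Z * (x - y) <= 0)%R by rewrite pmulr_rle0 ?ltz_nat ?n_gt0.
  lia.
have : (n%:Z <= n%:Z * (x - y))%R by rewrite ler_peMr //; lia.
lia.
Qed.

Lemma sum_ball j : (j <= n)%N -> forall (a : nat -> K) k,
  (\sum_(i < j) (a i)%:A * pi ^+ i) \in vball vL k ->
  forall i, (i < j)%N -> (a i)%:A * pi ^+ i \in vball vL k.
Proof.
elim: j => [|j IH] jn a k; first by [].
have jn' : (j <= n)%N by apply: ltnW.
rewrite big_ord_recr /=.
set S := \sum_(i < j) _; set t := _ * _ => hS'.
case ht: (t \in vball vL k).
  have hS : S \in vball vL k.
    by have := vballB hL hS' ht; rewrite addrK.
  by move=> i; rewrite ltnS leq_eqVlt => /orP[/eqP ->|]; [done|exact: IH].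
exfalso.
have hSn : S \notin vball vL k.
  apply/negP => hS; move: ht; have := vballB hL hS' hS.
  by rewrite addrAC subrr add0r => ->.
move: ht hSn; rewrite !vball_def; have [->|t0] := eqVneq t 0; first by [].
have [->|S0] := eqVneq S 0; first by [].
rewrite /= -!ltNge => ltk lSk.
have all_in : forall i, (i < j)%N -> (a i)%:A * pi ^+ i \in vball vL (vL S).
  by apply: IH => //; rewrite vball_def lexx orbT.
have [i hi] : exists i : 'I_j, (a i)%:A * pi ^+ i \notin vball vL (vL S + 1).
  apply/existsP; apply: contraT; rewrite negb_exists => /forallP h.
  have : S \in vball vL (vL S + 1).
    apply: (sum_ball_easy (F := fun i => (a i)%:A * pi ^+ i)) => i' lt.
    by have := h (Ordinal lt); rewrite negbK.
  rewrite vball_def (negbTE S0) /=; lia.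
have := all_in i (ltn_ord i); move: hi; rewrite !vball_def.
have [->|ti0] := eqVneq ((a i)%:A * pi ^+ i) 0; first by [].
move=> /= hi1 hi2.
have eS : vL S = vL ((a i)%:A * pi ^+ i) by lia.
have ai0 : a i != 0 by apply: contraNneq ti0 => ->; rewrite scale0r mul0r.
have aj0 : a j != 0 by apply: contraNneq t0 => e; rewrite /t e scale0r mul0r.
have ne : vL S != vL t.
  by rewrite eS /t !vterm //; apply: modn_distinct.
have := hS'; rewrite vball_def.
case: (ltgtP (vL S) (vL t)) ne => // [lt|lt] _.
  have [s0 ->] := vstrict hL S0 t0 lt; rewrite (negbTE s0) /=; lia.
have [s0 e] := vstrict hL t0 S0 lt; rewrite [t + S]addrC in s0 e; rewrite (negbTE s0) e /=; lia.
Qed.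


Lemma span_all (x : L) : exists a : nat -> K, x = \sum_(i < n) (a i)%:A * pi ^+ i.
Proof.
pose X : n.-tuple L := [tuple pi ^+ i | i < n].
have Xj (j : 'I_n) : X`_j = pi ^+ j by rewrite -tnth_nth tnth_mktuple.
have fX : free X.
  apply/freeP => k hk i.
  pose a m := oapp k 0 (insub m).
  have ea (j : 'I_n) : a j = k j by rewrite /a valK.
  have hs : \sum_(i < n) (a i)%:A * pi ^+ i \in vball vL 0.
    rewrite (eq_bigr (fun i => k i *: X`_i)); first by rewrite hk vball0.
    by move=> j _; rewrite ea mulr_algl -tnth_nth tnth_mktuple.
  have : forall kk, (a i)%:A * pi ^+ i \in vball vL kk.
    move=> kk; apply: (sum_ball (leqnn n)) => //.
    rewrite (eq_bigr (fun i => k i *: X`_i)); first by rewrite hk vball0.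
    by move=> j _; rewrite ea mulr_algl -tnth_nth tnth_mktuple.
  move/vball_all/eqP; rewrite mulf_eq0 expf_eq0 (negbTE pi0) andbF orbF alg_eq0.
  by rewrite ea => /eqP.
have sX : (<<X>> = fullv)%VS.
  apply/eqP; rewrite eqEdim subvf /= (eqP fX) size_tuple.
  by rewrite leqnn.
have xX : x \in <<X>>%VS by rewrite sX memvf.
have e := coord_span xX.
exists (fun m => oapp (fun i => coord X i x) 0 (insub m)).
rewrite {1}e; apply: eq_bigr => j _.
by rewrite Xj valK /= mulr_algl.
Qed.

Lemma L_complete : vcomplete vL.
Proof.
move=> u hu.
have [A hA] : exists A : nat -> nat -> K, forall m, u m = \sum_(i < n) (A m i)%:A * pi ^+ i.
  by apply: (nchoice (P := fun m (a : nat -> K) => u m = \sum_(i < n) (a i)%:A * pi ^+ i)) => m; apply: span_all.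
pose B m i := if (i < n)%N then A m i else 0.
have hB m : u m = \sum_(i < n) (B m i)%:A * pi ^+ i.
  by rewrite hA; apply: eq_bigr => i _; rewrite /B ltn_ord.
have hdiff m m' : u m - u m' = \sum_(i < n) (B m i - B m' i)%:A * pi ^+ i.
  rewrite !hB -sumrB; apply: eq_bigr => i _; by rewrite algB mulrBl.
have cauchy i : exists l, forall k : int, exists n0, forall m, (n0 <= m)%N ->
    B m i - l \in vball vK k.
  have [lt|ge] := ltnP i n; last first.
    by exists 0 => k; exists 0%N => m _; rewrite /B ltnNge ge /= subrr vball0.
  apply: Kc => k.
  have [n0 hn0] := hu (n%:Z * (k + 1))%R.
  exists n0 => m m' hm hm'.
  apply: (term_ball_inv (i := i)) => //.
  apply: (sum_ball (leqnn n) (a := fun i => B m i - B m' i)) => //.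
  by rewrite -hdiff; apply: hn0.
have [l hl] := nchoice cauchy.
exists (\sum_(i < n) (l i)%:A * pi ^+ i) => k.
have hN : forall i : 'I_n, exists n0, forall m, (n0 <= m)%N ->
    B m i - l i \in vball vK (Num.max k 0).
  by move=> i; apply: hl.
have [N0 hN0] := nchoice hN.
exists (\max_(i < n) N0 i) => m hm.
have -> : u m - \sum_(i < n) (l i)%:A * pi ^+ i =
          \sum_(i < n) (B m i - l i)%:A * pi ^+ i.
  rewrite hB -sumrB; apply: eq_bigr => i _; by rewrite algB mulrBl.
apply: (big_ind (fun x => x \in vball vL k)); [exact: vball0|exact: vballD|].
move=> i _.
apply: (vball_le (b := Num.max k 0)); first by rewrite le_max lexx.
apply: term_ball; first by rewrite le_max lexx orbT.
apply: hN0; apply: leq_trans hm; exact: leq_bigmax.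
Qed.

End Ext.

Section Q.
Variables (F : fieldType) (v : F -> int) (hv : discrete_valuation v).

Lemma nat_in i : (i%:R : F) \in vball v 0.
Proof.
elim: i => [|i IH]; first exact: vball0.
rewrite -addn1 natrD; apply: vballD => //.
by rewrite vball_def (v1 hv) lexx orbT.
Qed.

Lemma exists_q : [pchar F] =i pred0 -> finite_residue_field v ->
  exists q : nat, (0 < q)%N /\ (q%:R : F) != 0 /\ 1 <= v q%:R.
Proof.
move=> /pcharf0P ch [s hs].
have [f hf] : exists f : nat -> F, forall i, f i \in s /\ i%:R - f i \in vball v 1.
  apply: (nchoice (P := fun i y => y \in s /\ i%:R - y \in vball v 1)) => i.
  have [y ys hy] := hs _ (nat_in i); exists y; split => //; by rewrite -vmaxE.
pose r := [seq index (f i) s | i <- iota 0 (size s).+1].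
have : ~~ uniq r.
  apply/negP => ur.
  have sub : {subset r <= iota 0 (size s)}.
    move=> y /mapP [i _ ->].
    by rewrite mem_iota add0n index_mem (proj1 (hf i)).
  by have := uniq_leq_size ur sub; rewrite size_map !size_iota ltnn.
case/(uniqPn 0%N) => i [j [ij jr e]].
have ir : (i < size r)%N by apply: ltn_trans jr.
move: jr ir e; rewrite size_map size_iota => jr ir.
rewrite !(nth_map 0%N) ?size_iota // !nth_iota // !add0n => e.
have fe : f i = f j.
  by rewrite -(nth_index 0 (proj1 (hf i))) e nth_index // (proj1 (hf j)).
exists (j - i)%N; split; first by rewrite subn_gt0.
have q0 : ((j - i)%N%:R : F) != 0 by rewrite ch subn_eq0 -ltnNge.
split => //.
have : (j - i)%N%:R \in vball v 1.
  have -> : ((j - i)%N%:R : F) = (j%:R - f j) - (i%:R - f i).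
    by rewrite natrB ?(ltnW ij) // fe opprB addrA subrK.
  by apply: vballB => //; [exact: (proj2 (hf j)) | exact: (proj2 (hf i))].
by rewrite vball_def (negbTE q0).
Qed.

End Q.

Lemma vexpz (F : fieldType) (v : F -> int) (hv : discrete_valuation v) (t : F) z :
  t != 0 -> v t = 1 -> v (t ^ z) = z.
Proof.
move=> t0 vt; case: z => k.
  by rewrite -exprnP (vX hv _ t0) vt mulr1.
rewrite NegzE -exprnN (vV hv) ?expf_neq0 // (vX hv _ t0) vt mulr1.
by [].
Qed.

Lemma cm_eq (F : fieldType) (v : F -> int) N (x y : F) : x = y -> congr_mod v N x y.
Proof. by move=> ->; exists 0; [rewrite vmaxE vball0 | rewrite subrr mulr0]. Qed.

Lemma dir21 (K : fieldType) (L : fieldExtType K) (vK : K -> int) (vL : L -> int)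
  (hK : discrete_valuation vK) (hL : discrete_valuation vL) (ext : extends_val vK vL)
  (piK : K) (piK0 : piK != 0) (vpiK : vK piK = 1)
  (vLpiK : vL piK%:A = (\dim {:L})%:Z) (tau : L) (b0 : K) :
  uniformizer vL tau -> tau ^+ \dim {:L} = b0%:A ->
  exists ac : nat -> L -> L, ac_system vL ac /\ ac_restricts vK vL ac.
Proof.
case=> tau0 vtau htau.
pose f (x : L) := x * tau ^ (- vL x).
have vf x : x != 0 -> f x != 0 /\ vL (f x) = 0.
  move=> x0; split; first by rewrite mulf_neq0 // expfz_neq0.
  by rewrite (vM hL) ?expfz_neq0 // (vexpz hL) //; lia.
have fr x : f x \in vring vL.
  have [->|x0] := eqVneq x 0; first by rewrite /f mul0r vringE vball0.
  by rewrite vringE vball_def (proj2 (vf x x0)) lexx orbT.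
have fM x y : x != 0 -> y != 0 -> f (x * y) = f x * f y.
  move=> x0 y0; rewrite /f (vM hL) // opprD exprzDr ?unitfE //.
  by rewrite mulrACA.
have fu u : vL u = 0 -> f u = u.
  by move=> vu; rewrite /f vu oppr0 expr0z mulr1.
exists (fun _ => f); split; first split.
- move=> N _; split.
  + exact: fr.
  + by apply: cm_eq; rewrite /f mul0r.
  + by move=> x y x0 y0; apply: cm_eq; apply: fM.
  + move=> x x0; exists (f x)^-1.
      rewrite vringE vball_def invr_eq0 (negbTE (proj1 (vf x x0))) /=.
      by rewrite (vV hL) ?(proj1 (vf x x0)) // (proj2 (vf x x0)).
    by apply: cm_eq; rewrite mulfV // (proj1 (vf x x0)).
  + by move=> u _ vu; apply: cm_eq; apply: fu.
- by move=> N M _ _ x; apply: cm_eq.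
move=> N _ a.
have [->|a0] := eqVneq a 0.
  by exists 0; [rewrite vringE vball0 | apply: cm_eq; rewrite scale0r /f mul0r].
have b00 : b0 != 0.
  by rewrite -(alg_eq0 L) -htau expf_neq0.
have e : f a%:A = (a * b0 ^ (- vK a))%:A.
  rewrite /f (vLK hK hL ext piK0 vpiK vLpiK a0) -mulrN -exprz_exp.
  rewrite -exprnP htau algM; congr (_ * _).
  by rewrite -[RHS]/(in_alg L _) fmorphXz.
exists (a * b0 ^ (- vK a)); last by apply: cm_eq.
by rewrite -ext -e.
Qed.

Section Main.
Variables (K : fieldType) (L : fieldExtType K) (vK : K -> int) (vL : L -> int).
Hypotheses (hK : discrete_valuation vK) (hL : discrete_valuation vL)
  (ext : extends_val vK vL) (Kc : vcomplete vK).
Variable piK : K.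
Hypotheses (piK0 : piK != 0) (vpiK : vK piK = 1)
  (vLpiK : vL piK%:A = (\dim {:L})%:Z).
Local Notation n := (\dim {:L}).

Lemma K_closed (x : L) : (forall k, exists g : K, x - g%:A \in vball vL k) ->
  exists b : K, x = b%:A.
Proof.
move=> h.
have [G hG] : exists G : nat -> K, forall m, x - (G m)%:A \in vball vL (n%:Z * m%:Z).
  by apply: (nchoice (P := fun (m : nat) g => x - g%:A \in vball vL (n%:Z * m%:Z))) => m; apply: h.
have hn := n_gt0 L.
have [b hb] : exists b, forall k, exists n0, forall m, (n0 <= m)%N -> G m - b \in vball vK k.
  apply: Kc => k; exists (absz k) => m m' hm hm'.
  apply: (vball_le (b := (absz k)%:Z)); first by lia.
  apply: (vLK_ball_inv hK hL ext piK0 vpiK vLpiK).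
  have -> : (G m - G m')%:A = (x - (G m')%:A) - (x - (G m)%:A) :> L.
    by rewrite algB; ring.
  apply: (vballB hL).
    apply: (vball_le (b := n%:Z * m'%:Z)) => //; nia.
  apply: (vball_le (b := n%:Z * m%:Z)) => //; nia.
exists b; apply/eqP; rewrite -subr_eq0; apply/eqP/vball_all => k.
have [n1 hn1] := hb (absz k).
pose m := maxn n1 (absz k).
have -> : x - b%:A = (x - (G m)%:A) + (G m - b)%:A.
  by rewrite algB; ring.
apply: (vballD hL).
  apply: (vball_le (b := n%:Z * m%:Z)) => //.
  have : (absz k <= m)%N by apply: leq_maxr.
  nia.
apply: (vball_le (b := n%:Z * (absz k)%:Z)); first by nia.
apply: (vLK_ball hK hL ext piK0 vpiK vLpiK).
by apply: hn1; apply: leq_maxl.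
Qed.


Lemma vring_X (F : fieldType) (v : F -> int) (hv : discrete_valuation v) (x : F) j :
  x \in vball v 0 -> x ^+ j \in vball v 0.
Proof.
move=> hx; elim: j => [|j IH]; first by rewrite expr0 vball_def (v1 hv) lexx orbT.
by rewrite exprS -[0 : int](addr0 0); apply: (vballM hv).
Qed.

Lemma ac_unit N (g : L -> L) x : ac_map vL N g -> x != 0 -> g x != 0 /\ vL (g x) = 0.
Proof.
case=> gr _ _ gU _ x0.
have [y yr [mm hmm e]] := gU x x0.
have h1 : g x * y - 1 \in vball vL 1.
  rewrite e -[1 : int](add0r 1); apply: (vballM hL); first exact: nat_in.
  by rewrite -vmaxE.
have [p0 vp] := near_unit hL (oner_neq0 L) (v1 hL) h1.
move: p0; rewrite mulf_eq0 negb_or => /andP [g0 y0].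
split => //.
move: (gr x) yr vp; rewrite !vringE !vball_def (negbTE g0) (negbTE y0) (vM hL) //=.
move=> h2 h3 h4; apply/eqP; rewrite eq_le h2 andbT.
by rewrite -h4 lerDl.
Qed.

Lemma dir12 : [pchar K] =i pred0 -> finite_residue_field vK ->
  (exists ac : nat -> L -> L, ac_system vL ac /\ ac_restricts vK vL ac) ->
  exists tau : L, uniformizer vL tau /\ exists a : K, tau ^+ n = a%:A.
Proof.
move=> chK resK [ac [[acm acc] restr]].
have [q [q0 [qR0 vq]]] := exists_q hK chK resK.
have hn := n_gt0 L.
have qL : (q%:R : L) = (q%:R : K)%:A by rewrite -[RHS]/(in_alg L _) rmorph_nat.
have vLq : 1 <= vL (q%:R : L).
  rewrite qL (vLK hK hL ext piK0 vpiK vLpiK qR0); nia.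
have qL0 : (q%:R : L) != 0 by rewrite qL alg_eq0.
have qm_ball m : ((q ^ m)%N%:R : L) \in vball vL m%:Z.
  rewrite natrX vball_def expf_eq0 (negbTE qL0) andbF /= (vX hL _ qL0); nia.
have cm_ball m x y : congr_mod vL (q ^ m) x y -> x - y \in vball vL m%:Z.
  case=> mm hmm ->; rewrite -[m%:Z](addr0 m%:Z); apply: (vballM hL) => //.
  by apply: (vball_le (b := 1)) => //; rewrite -vmaxE.
have qpos m : (0 < q ^ m)%N by rewrite expn_gt0 q0.
have [pi [pi0 vpi]] := dv_norm hL.
pose d m := ac (q ^ m)%N pi.
have dc m m' : (m <= m')%N -> d m' - d m \in vball vL m%:Z.
  move=> le; apply: (cm_ball); rewrite /d.
  have -> : (q ^ m')%N = (q ^ m * q ^ (m' - m))%N by rewrite -expnD subnKC.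
  by apply: (acc).
have [c hc] : exists c, forall k, exists n0, forall m, (n0 <= m)%N -> d m - c \in vball vL k.
  apply: (L_complete hK hL ext Kc piK0 vpiK vLpiK pi0 vpi (u := d)) => k.
  exists (absz k) => m m' hm hm'.
  have [le|lt] := leqP m m'.
    have := dc _ _ le; rewrite -(vballN hL) opprB => h.
    apply: (vball_le (b := m%:Z)); last exact: h.
    move: hm; lia.
  apply: (vball_le (b := m'%:Z)); last exact: (dc) (ltnW lt).
  move: hm'; lia.
have du m : d m != 0 /\ vL (d m) = 0 by apply: (ac_unit (acm _ (qpos m))).
have [c0 vc] : c != 0 /\ vL c = 0.
  have [n0 h] := hc 1.
  apply: (near_unit hL (proj1 (du n0)) (proj2 (du n0))).
  by rewrite -(vballN hL) opprB; apply: h.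
pose tau := pi / c.
have tau0 : tau != 0 by rewrite mulf_neq0 ?invr_neq0.
have vtau : vL tau = 1 by rewrite (vM hL) ?invr_neq0 // (vV hL) // vc vpi oppr0 addr0.
exists tau; split; first by [].
pose w := tau ^+ n / piK%:A.
have PK0 : piK%:A != 0 :> L by rewrite alg_eq0.
have w0 : w != 0 by rewrite mulf_neq0 ?invr_neq0 ?expf_neq0.
have vw : vL w = 0.
  by rewrite (vM hL) ?invr_neq0 ?expf_neq0 // (vV hL) // (vX hL _ tau0) vtau vLpiK; lia.
have key : forall k : nat, exists g : K, w - g%:A \in vball vL k.+1%:Z.
  move=> k.
  have [n0 hn0] := hc k.+1%:Z.
  pose m := maxn k.+1 n0.
  pose K1 := k.+1%:Z.
  have hdm : d m - c \in vball vL K1 by apply: hn0; apply: leq_maxr.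
  pose N := (q ^ m)%N.
  have cmK x y : congr_mod vL N x y -> x - y \in vball vL K1.
    move=> /cm_ball h; apply: (vball_le (b := m%:Z)) => //.
    have : (k.+1 <= m)%N by apply: leq_maxl. lia.
  have [gr g0 gM gU gu] := acm N (qpos m).
  pose g := ac N.
  have csym x y : x - y \in vball vL K1 -> y - x \in vball vL K1.
    by rewrite -(vballN hL) opprB.
  have ctr x y z : x - y \in vball vL K1 -> y - z \in vball vL K1 -> x - z \in vball vL K1.
    by move=> h1 h2; have := vballD hL h1 h2; rewrite addrA subrK.
  have cmul x x' y y' : x \in vball vL 0 -> y' \in vball vL 0 ->
      x - x' \in vball vL K1 -> y - y' \in vball vL K1 -> x * y - x' * y' \in vball vL K1.
    move=> xr yr h1 h2.
    have -> : x * y - x' * y' = x * (y - y') + (x - x') * y' by ring.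
    apply: (vballD hL).
      by rewrite -[K1](add0r K1); apply: (vballM hL).
    by rewrite -[K1](addr0 K1); apply: (vballM hL).
  have crefl x : x - x \in vball vL K1 by rewrite subrr vball0.
  have cpow x y j : x \in vball vL 0 -> y \in vball vL 0 -> x - y \in vball vL K1 ->
      x ^+ j - y ^+ j \in vball vL K1.
    move=> xr yr h; elim: j => [|j IH]; first by rewrite !expr0.
    by rewrite !exprS; apply: (cmul) => //; apply: (vring_X hL).
  have gX x j : x != 0 -> g (x ^+ j) - g x ^+ j \in vball vL K1.
    move=> x0; elim: j => [|j IH].
      by rewrite !expr0; apply: (cmK); apply: (gu); rewrite ?oner_neq0 ?(v1 hL).
    rewrite !exprSr.
    apply: (ctr _ (g (x ^+ j) * g x)).
      by apply: (cmK); apply: (gM); rewrite ?expf_neq0.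
    apply: (cmul); [exact: (gr) | exact: (gr) | exact: IH | exact: (crefl)].
  have [beta br hbeta] := restr N (qpos m) piK.
  have Br : beta%:A \in vball vL 0 by rewrite -vringE ext.
  have wr : w \in vball vL 0 by rewrite vball_def vw lexx orbT.
  have cr : c \in vball vL 0 by rewrite vball_def vc lexx orbT.
  have epi : pi ^+ n = (w * piK%:A) * c ^+ n.
    by rewrite /w divfK // -exprMn /tau divfK.
  have h1 : g (pi ^+ n) - c ^+ n \in vball vL K1.
    apply: (ctr _ (d m ^+ n)); first exact: (gX).
    apply: (cpow); [by rewrite vball_def (proj2 (du m)) lexx orbT | exact: cr | exact: hdm].
  have h2 : g (pi ^+ n) - (w * beta%:A) * c ^+ n \in vball vL K1.
    rewrite epi; apply: (ctr _ (g (w * piK%:A) * g (c ^+ n))).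
      by apply: (cmK); apply: (gM); [apply: mulf_neq0 | apply: expf_neq0].
    apply: (cmul); [exact: (gr) | exact: (vring_X hL _ cr) | | ].
      apply: (ctr _ (g w * g piK%:A)); first by apply: (cmK); apply: (gM).
      apply: (cmul); [exact: (gr) | exact: Br | | ].
        by apply: (cmK); apply: (gu).
      by apply: (cmK).
    apply: (ctr _ (g c ^+ n)); first exact: (gX).
    apply: (cpow); [exact: (gr) | exact: cr | ].
    by apply: (cmK); apply: (gu).
  have h3 : (w * beta%:A) * c ^+ n - c ^+ n \in vball vL K1 by apply: (ctr) (csym _ _ h2) h1.
  have cn0 : c ^+ n != 0 by rewrite expf_neq0.
  have h4 : w * beta%:A - 1 \in vball vL K1.
    have -> : w * beta%:A - 1 = ((w * beta%:A) * c ^+ n - c ^+ n) * (c ^+ n)^-1.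
      by rewrite mulrBl mulfK // mulfV.
    rewrite -[K1](addr0 K1); apply: (vballM hL) => //.
    by rewrite vball_def invr_eq0 (negbTE cn0) (vV hL) // (vX hL _ c0) vc mulr0 oppr0 lexx orbT.
  have h5 : w * beta%:A - 1 \in vball vL 1.
    by apply: (vball_le (b := K1)) => //; rewrite /K1; lia.
  have [wb0 vwb] := near_unit hL (oner_neq0 L) (v1 hL) h5.
  have B0 : beta%:A != 0 :> L by apply: contraNneq wb0 => ->; rewrite mulr0.
  have vB : vL beta%:A = 0 by move: vwb; rewrite (vM hL) // vw add0r.
  exists beta^-1.
  have -> : w - (beta^-1)%:A = (w * beta%:A - 1) * (beta%:A)^-1.
    by rewrite algV mulrBl -mulrA mulfV // mulr1 mul1r.
  rewrite -/K1 -[K1](addr0 K1); apply: (vballM hL) => //.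
  by rewrite vball_def invr_eq0 (negbTE B0) (vV hL) // vB oppr0 lexx orbT.
have [b hb] : exists b : K, w = b%:A.
  apply: (K_closed) => k.
  have [g hg] := key (absz k).
  exists g; apply: (vball_le (b := (absz k).+1%:Z)) => //; lia.
exists (b * piK); rewrite algM -hb /w divfK //.
Qed.

End Main.

Unset Implicit Arguments.

Theorem lemma3p2 (K : fieldType) (L : fieldExtType K)
    (vK : K -> int) (vL : L -> int) :
  padic_field vK -> discrete_valuation vL -> extends_val vK vL ->
  totally_ramified vK vL ->
  (exists ac : nat -> L -> L, ac_system vL ac /\ ac_restricts vK vL ac) <->
  (exists tau : L, uniformizer vL tau /\ exists a : K, tau ^+ \dim {:L} = a%:A).
Proof.
case=> chK hK Kc resK hL ext [piK [[piK0 vpiK] vLpiK]].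
split.
- exact: (dir12 hK hL ext Kc piK0 vpiK vLpiK chK resK).
- case=> tau [ut [b0 hb]].
  exact: (dir21 hK hL ext piK0 vpiK vLpiK ut hb).
Qed.
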